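(* Assume $z>w>x>y$, $w+x>z+y$, $w>0$, $z>0$, that $G$ is connected, that $\boldsymbol\psi>\mathbf 0$ and $\boldsymbol\eta\in[0,1]^n$ are time-invariant, and that each $\lambda_i(t)>0$ is increasing in $t$ with $\lim_{t\to\infty}\lambda_i(t)=\infty$. Then for every initial condition $\mathbf q(0)\in\mathbb R^n$ there exist a vector $\underline{\boldsymbol\lambda}>\mathbf 0$ and a number $\underline T>0$ such that if $\lambda_i(t)<\underline\lambda_i$ for all $i$ and all $t<\underline T$, then all players favour the risk-dominant action $D$ as $t\to\infty$ (i.e., $q_i(t)>0$ for all $i$ and all sufficiently large $t$).
   Context: There are $n$ agents on an undirected simple graph with symmetric adjacency matrix $G\in\{0,1\}^{n\times n}$, $G_{ii}=0$; $N_i=\{j:G_{ij}=1\}$. Actions are $C$ and $D$. The stage payoff to an agent playing the row action against a neighbour playing the column action is $u(C,C)=z$, $u(C,D)=y$, $u(D,C)=x$, $u(D,D)=w$. The state is $\mathbf q(t)\in\mathbb R^n$ ($q_i$ = attraction of $D$ minus attraction of $C$ for agent $i$), $p_i(t)=1/(1+e^{-\lambda_i(t) q_i(t)})$, and the (non-autonomous) dynamics are $$\dot q_i=-\psi_i q_i+\big(p_i+\eta_i(1-p_i)\big)\sum_{j\in N_i}\big(p_jw+(1-p_j)x\big)-\big(1-p_i+\eta_ip_i\big)\sum_{j\in N_i}\big(p_jy+(1-p_j)z\big).$$ *)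

(* Defs.v *)
From Stdlib Require Import Reals Lra Relations.
From Coquelicot Require Import Coquelicot.
Open Scope R_scope.

(* Agents are indexed by nat, with only indices i < n meaningful. *)

Fixpoint sumR (n : nat) (f : nat -> R) : R :=
  match n with
  | O => 0
  | S m => sumR m f + f m
  end.

Definition simple_graph (n : nat) (G : nat -> nat -> bool) : Prop :=
  (forall i j, (i < n)%nat -> (j < n)%nat -> G i j = G j i) /\
  (forall i, (i < n)%nat -> G i i = false).

Definition edge (n : nat) (G : nat -> nat -> bool) (a b : nat) : Prop :=
  (a < n)%nat /\ (b < n)%nat /\ G a b = true.

Definition connected (n : nat) (G : nat -> nat -> bool) : Prop :=
  forall i j, (i < n)%nat -> (j < n)%nat -> clos_refl_trans nat (edge n G) i j.

Definition nbsum (n : nat) (G : nat -> nat -> bool) (i : nat) (f : nat -> R) : R :=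
  sumR n (fun j => if G i j then f j else 0).

(* logit choice probability of D *)
Definition prob (lam qi : R) : R := 1 / (1 + exp (- (lam * qi))).

Definition rhs (n : nat) (G : nat -> nat -> bool) (x y z w : R)
  (psi eta : nat -> R) (lam : nat -> R -> R) (t : R) (q : nat -> R) (i : nat) : R :=
  let p := fun j => prob (lam j t) (q j) in
  - psi i * q i
  + (p i + eta i * (1 - p i)) * nbsum n G i (fun j => p j * w + (1 - p j) * x)
  - (1 - p i + eta i * p i) * nbsum n G i (fun j => p j * y + (1 - p j) * z).

Definition is_solution (n : nat) (G : nat -> nat -> bool) (x y z w : R)
  (psi eta : nat -> R) (lam : nat -> R -> R) (q0 : nat -> R) (q : R -> nat -> R) : Prop :=
  (forall i, (i < n)%nat -> q 0 i = q0 i) /\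
  (forall i, (i < n)%nat ->
     filterlim (fun s => q s i) (at_right 0) (locally (q0 i))) /\
  (forall i t, (i < n)%nat -> 0 < t ->
     is_derive (fun s => q s i) t (rhs n G x y z w psi eta lam t (q t) i)).

(* Main.v *)
Require Import Defs.
From Stdlib Require Import Reals Lra Relations Lia Classical.
From Coquelicot Require Import Coquelicot.
Open Scope R_scope.

Lemma sumR_le n f g : (forall j, (j < n)%nat -> f j <= g j) -> sumR n f <= sumR n g.
Proof. induction n; simpl; intros H. lra. assert (f n <= g n) by (apply H; lia).
 assert (sumR n f <= sumR n g) by (apply IHn; intros; apply H; lia). lra. Qed.

Lemma sumR_const n c : sumR n (fun _ => c) = INR n * c.
Proof. induction n; simpl sumR. simpl; ring. rewrite IHn, S_INR. ring. Qed.

Lemma sumR_nonneg n f : (forall j, (j < n)%nat -> 0 <= f j) -> 0 <= sumR n f.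
Proof. intros H. pose proof (sumR_le n (fun _ => 0) f H). rewrite sumR_const in H0. lra. Qed.

Lemma sumR_ge_one n f k : (forall j, (j < n)%nat -> 0 <= f j) -> (k < n)%nat -> f k <= sumR n f.
Proof. induction n; intros H Hk. lia. simpl.
 destruct (Nat.eq_dec k n) as [->|Hne].
 - assert (0 <= sumR n f) by (apply sumR_nonneg; intros; apply H; lia). lra.
 - assert (f k <= sumR n f) by (apply IHn; [intros; apply H; lia| lia]).
   assert (0 <= f n) by (apply H; lia). lra. Qed.

Lemma sumR_lin n f g a b : sumR n (fun j => a * f j - b * g j) = a * sumR n f - b * sumR n g.
Proof. induction n; simpl. ring. rewrite IHn. ring. Qed.

Definition Gf (x y z w e p r : R) : R :=
  (p + e * (1 - p)) * (r * w + (1 - r) * x) - (1 - p + e * p) * (r * y + (1 - r) * z).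

Lemma sumR_if n (g : nat -> bool) P Q a b :
  sumR n (fun j => if g j then P * a j - Q * b j else 0) =
  P * sumR n (fun j => if g j then a j else 0) - Q * sumR n (fun j => if g j then b j else 0).
Proof. induction n; simpl. ring. rewrite IHn. destruct (g n); ring. Qed.

Lemma rhs_decomp n G x y z w psi eta lam t q i :
  rhs n G x y z w psi eta lam t q i =
  - psi i * q i + nbsum n G i (fun j => Gf x y z w (eta i) (prob (lam i t) (q i)) (prob (lam j t) (q j))).
Proof.
 unfold rhs, nbsum, Gf. cbv zeta.
 rewrite (sumR_if n (G i) _ _ (fun j => prob (lam j t) (q j) * w + (1 - prob (lam j t) (q j)) * x)
   (fun j => prob (lam j t) (q j) * y + (1 - prob (lam j t) (q j)) * z)).
 ring.
Qed.

Lemma neighbour n G : (2 <= n)%nat -> connected n G -> forall i, (i < n)%nat -> exists k, (k < n)%nat /\ G i k = true.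
Proof.
 intros Hn Hc i Hi.
 assert (Hj0 : exists j, (j < n)%nat /\ j <> i) by (exists (if Nat.eq_dec i 0 then 1%nat else 0%nat); destruct (Nat.eq_dec i 0); lia).
 destruct Hj0 as [j Hj].
 pose proof (clos_rt_rt1n _ _ _ _ (Hc i j Hi (proj1 Hj))) as H.
 inversion H; subst. lia.
 match goal with He : edge _ _ _ ?k |- _ => destruct He as [_ [Hk Hg]]; exists k; auto end.
Qed.

Lemma prob_range l q : 0 < prob l q < 1.
Proof. unfold prob. pose proof (exp_pos (- (l * q))). split.
 apply Rdiv_lt_0_compat; lra.
 assert (1/(1 + exp (- (l*q))) * (1 + exp (- (l*q))) = 1) by (field; lra). nra. Qed.

Lemma prob_ge_half l q : 0 <= l * q -> 1/2 <= prob l q.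
Proof. intros H. unfold prob. assert (exp (- (l*q)) <= 1).
 { rewrite <- exp_0. destruct (Req_dec (l*q) 0) as [E|E]. rewrite E, Ropp_0. lra.
   left. apply exp_increasing. lra. }
 pose proof (exp_pos (- (l * q))).
 assert (1/(1 + exp (- (l*q))) * (1 + exp (- (l*q))) = 1) by (field; lra). nra. Qed.

Lemma prob_zero l : prob l 0 = 1/2.
Proof. unfold prob. rewrite Rmult_0_r, Ropp_0, exp_0. field. Qed.

Lemma prob_near l q rho : 0 < rho <= 1/2 -> Rabs (l * q) <= rho -> Rabs (prob l q - 1/2) <= rho.
Proof.
 intros Hr Hv. set (v := l * q) in *. unfold prob. fold v.
 pose proof (exp_ineq1_le (-v)). pose proof (exp_ineq1_le v).
 pose proof (exp_pos (-v)) as Hp. pose proof (exp_pos v).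
 assert (Hm : exp v * exp (-v) = 1) by (rewrite <- exp_plus; replace (v + -v) with 0 by ring; apply exp_0).
 set (u := exp (-v)) in *. set (e := exp v) in *.
 apply Rabs_le_between in Hv.
 assert (u <= 1 + 2*rho).
 { assert (e >= 1 - rho) by lra. nra. }
 assert (u >= 1 - rho) by lra.
 replace (1 / (1 + u) - 1/2) with ((1 - u) / (2 * (1 + u))) by (field; lra).
 assert (Hk: (1 - u) / (2 * (1 + u)) * (2 * (1 + u)) = 1 - u) by (field; lra).
 set (k := (1 - u) / (2 * (1 + u))) in *.
 apply Rabs_le. split; nra.
Qed.

Definition KK (x y z w : R) := Rabs w + Rabs x + Rabs y + Rabs z.

Lemma Gf_bound x y z w e p r : 0 <= e <= 1 -> 0 <= p <= 1 -> 0 <= r <= 1 ->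
  - KK x y z w <= Gf x y z w e p r <= KK x y z w.
Proof.
 intros He Hp Hr. unfold KK, Gf.
 pose proof (Rle_abs w). pose proof (Rle_abs x). pose proof (Rle_abs y). pose proof (Rle_abs z).
 pose proof (Rabs_Ropp w). pose proof (Rle_abs (-w)).
 pose proof (Rle_abs (-x)). pose proof (Rle_abs (-y)). pose proof (Rle_abs (-z)).
 rewrite !Rabs_Ropp in *.
 set (P := p + e * (1 - p)). set (Q := 1 - p + e * p).
 assert (0 <= P <= 1) by (unfold P; nra). assert (0 <= Q <= 1) by (unfold Q; nra).
 set (A := r * w + (1 - r) * x). set (B := r * y + (1 - r) * z).
 assert (- (Rabs w + Rabs x) <= A <= Rabs w + Rabs x) by (unfold A; nra).
 assert (- (Rabs y + Rabs z) <= B <= Rabs y + Rabs z) by (unfold B; nra).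
 split; nra.
Qed.

Lemma Gf_near x y z w e p r rho : w + x > z + y -> 0 <= e <= 1 -> 0 < rho <= 1/2 ->
  Rabs (p - 1/2) <= rho -> Rabs (r - 1/2) <= rho ->
  Gf x y z w e p r >= (w + x - y - z) / 4 - 2 * rho * KK x y z w.
Proof.
 intros Hrd He Hr Hp Hq. apply Rabs_le_between in Hp. apply Rabs_le_between in Hq.
 unfold KK.
 pose proof (Rle_abs w). pose proof (Rle_abs x). pose proof (Rle_abs y). pose proof (Rle_abs z).
 pose proof (Rle_abs (-w)).
 pose proof (Rle_abs (-x)). pose proof (Rle_abs (-y)). pose proof (Rle_abs (-z)).
 rewrite !Rabs_Ropp in *.
 set (K := Rabs w + Rabs x + Rabs y + Rabs z) in *.
 assert (HKdef: K = Rabs w + Rabs x + Rabs y + Rabs z) by reflexivity.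
 set (u := p - 1/2). set (v := r - 1/2).
 set (W := w - x - y + z).
 set (AB := (w + x + y + z) / 2 + v * (w - x + y - z)).
 assert (HG : Gf x y z w e p r = (1 + e) / 4 * (w + x - y - z) + (1 + e) / 2 * v * W + u * ((1 - e) * AB)).
 { unfold Gf, AB, W, u, v. field. }
 assert (HW : - K <= W <= K) by (unfold W; lra).
 assert (HAB : - K <= AB <= K).
 { unfold AB. assert (- (Rabs w + Rabs x + Rabs y + Rabs z) <= w - x + y - z <= Rabs w + Rabs x + Rabs y + Rabs z) by lra.
   unfold v. split; nra. }
 set (s := (1 - e) * AB) in *.
 assert (Hs : - K <= s <= K) by (unfold s; split; nra).
 assert (Hv : - rho <= v <= rho) by (unfold v; lra).
 assert (Hu : - rho <= u <= rho) by (unfold u; lra).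
 assert (T1 : (1 + e) / 2 * v * W >= - rho * K).
 { set (m := (1+e)/2 * v). assert (- rho <= m <= rho) by (unfold m; split; nra). nra. }
 assert (T2 : u * s >= - rho * K) by nra.
 rewrite HG. assert ((1 + e) / 4 * (w + x - y - z) >= (w + x - y - z)/4) by nra.
 lra.
Qed.

Lemma Gf_pos x y z w e r : z > w -> w > x -> x > y -> w + x > z + y -> 0 <= e <= 1 -> 1/2 <= r ->
  Gf x y z w e (1/2) r > 0.
Proof.
 intros H1 H2 H3 H4 He Hr. unfold Gf.
 replace ((1 / 2 + e * (1 - 1 / 2)) * (r * w + (1 - r) * x) -
   (1 - 1 / 2 + e * (1 / 2)) * (r * y + (1 - r) * z)) with
   ((1 + e) / 2 * ((w + x - y - z)/2 + (r - 1/2) * ((w - y) - (x - z)))) by field.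
 assert ((r - 1/2) * ((w - y) - (x - z)) >= 0) by nra. nra.
Qed.

Lemma deriv_cont (f : R -> R) x l : is_derive f x l -> forall eps, eps > 0 ->
  exists d, d > 0 /\ forall t, Rabs (t - x) < d -> Rabs (f t - f x) < eps.
Proof.
 intros H eps He.
 assert (Hc : continuous f x) by (apply (ex_derive_continuous (K:=R_AbsRing) (V:=R_NormedModule) f x); exists l; exact H).
 unfold continuous in Hc. rewrite filterlim_locally in Hc.
 destruct (Hc (mkposreal eps He)) as [d Hd].
 exists d. split. apply cond_pos. intros t Ht. apply (Hd t). exact Ht.
Qed.

Lemma deriv_pos_left (f : R -> R) x l : is_derive f x l -> l > 0 -> forall a, a < x ->
  exists t, a <= t < x /\ f t < f x.
Proof.
 intros H Hl a Ha. apply is_derive_Reals in H.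
 destruct (H l Hl) as [delta Hd].
 set (h := - (Rmin delta (x - a)) / 2).
 assert (Hm1 : Rmin delta (x - a) <= delta) by apply Rmin_l.
 assert (Hm2 : Rmin delta (x - a) <= x - a) by apply Rmin_r.
 assert (Hm3 : 0 < Rmin delta (x - a)) by (apply Rmin_pos; [apply cond_pos | lra]).
 assert (Hh : h < 0) by (unfold h; lra).
 specialize (Hd h ltac:(lra)).
 assert (Rabs h < delta) by (rewrite Rabs_left by lra; unfold h; lra).
 specialize (Hd H0). apply Rabs_lt_between in Hd.
 exists (x + h). split. unfold h; lra.
 set (D := f (x + h) - f x) in *.
 assert (D = D / h * h) by (field; lra). assert (D / h > 0) by lra. assert (D < 0) by nra. unfold D in *. lra.
Qed.

Lemma unif_pos n (q : R -> nat -> R) c (D : R -> nat -> R) :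
  (forall i, (i < n)%nat -> is_derive (fun s => q s i) c (D c i)) ->
  (forall i, (i < n)%nat -> q c i > 0) ->
  exists d, d > 0 /\ forall t, Rabs (t - c) < d -> forall i, (i < n)%nat -> q t i > 0.
Proof.
 induction n; intros Hd Hp.
 - exists 1. split. lra. intros; lia.
 - destruct IHn as [d1 [Hd1 H1]]. intros; apply Hd; lia. intros; apply Hp; lia.
   destruct (deriv_cont _ _ _ (Hd n ltac:(lia)) (q c n) (Hp n ltac:(lia))) as [d2 [Hd2 H2]].
   exists (Rmin d1 d2). split. apply Rmin_pos; lra.
   intros t Ht i Hi. assert (Rmin d1 d2 <= d1) by apply Rmin_l. assert (Rmin d1 d2 <= d2) by apply Rmin_r.
   destruct (Nat.eq_dec i n) as [->|Hne].
   + specialize (H2 t ltac:(lra)). apply Rabs_lt_between in H2. lra.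
   + apply H1. lra. lia.
Qed.

Lemma invariance n (q : R -> nat -> R) (D : R -> nat -> R) t1 :
  t1 > 0 ->
  (forall i, (i < n)%nat -> q t1 i > 0) ->
  (forall t i, (i < n)%nat -> 0 < t -> is_derive (fun s => q s i) t (D t i)) ->
  (forall t i, 0 < t -> (i < n)%nat -> q t i = 0 -> (forall j, (j < n)%nat -> q t j >= 0) -> D t i > 0) ->
  forall t i, t >= t1 -> (i < n)%nat -> q t i > 0.
Proof.
 intros Ht1 Hq1 Hder Hpos t2 i0 Ht2 Hi0.
 apply Rnot_le_gt. intros Hneg.
 set (E := fun t => t1 <= t <= t2 /\ forall u, t1 <= u <= t -> forall i, (i < n)%nat -> q u i > 0).
 assert (HE1 : E t1). { split. lra. intros u Hu i Hi. replace u with t1 by lra. auto. }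
 assert (Hb : bound E). { exists t2. intros u [Hu _]. lra. }
 destruct (completeness E Hb (ex_intro _ t1 HE1)) as [c [Hub Hlub]].
 assert (Hc1 : t1 <= c) by (apply Hub; exact HE1).
 assert (Hc2 : c <= t2) by (apply Hlub; intros u [Hu _]; lra).
 assert (HA : forall u, t1 <= u < c -> forall i, (i < n)%nat -> q u i > 0).
 { intros u Hu i Hi. destruct (classic (exists v, E v /\ v > u)) as [[v [[_ Hv] Hvu]]|Hno].
   - apply Hv; [lra | auto].
   - exfalso. assert (c <= u). { apply Hlub. intros v Ev. apply Rnot_gt_le. intro. apply Hno. exists v; auto. } lra. }
 assert (HB : forall i, (i < n)%nat -> q c i >= 0).
 { intros i Hi. destruct (Req_dec c t1) as [->|Hne]. left; auto.
   apply Rnot_lt_ge. intros Hlt.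
   destruct (deriv_cont _ _ _ (Hder c i Hi ltac:(lra)) (- q c i) ltac:(lra)) as [d [Hd Hdd]].
   set (u := c - Rmin d (c - t1) / 2).
   assert (Rmin d (c - t1) <= d) by apply Rmin_l. assert (Rmin d (c - t1) <= c - t1) by apply Rmin_r.
   assert (0 < Rmin d (c - t1)) by (apply Rmin_pos; lra).
   specialize (Hdd u). assert (Rabs (u - c) < d) by (unfold u; rewrite Rabs_left by lra; lra).
   specialize (Hdd H2). apply Rabs_lt_between in Hdd.
   assert (q u i > 0) by (apply HA; [unfold u; lra | auto]). lra. }
 assert (HC : exists i, (i < n)%nat /\ q c i <= 0).
 { apply NNPP. intros Hno.
   assert (Hall : forall i, (i < n)%nat -> q c i > 0).
   { intros i Hi. apply Rnot_le_gt. intro. apply Hno. exists i; auto. }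
   destruct (Req_dec c t2) as [->|Hne]. specialize (Hall i0 Hi0). lra.
   destruct (unif_pos n q c D (fun i Hi => Hder c i Hi ltac:(lra)) Hall) as [d [Hd Hdd]].
   set (v := Rmin t2 (c + d / 2)).
   assert (v <= t2) by apply Rmin_l. assert (v <= c + d/2) by apply Rmin_r.
   assert (c < v) by (unfold v; apply Rmin_glb_lt; lra).
   assert (E v). { split. lra. intros u Hu i Hi. destruct (Rlt_le_dec u c).
     apply HA; auto; lra. apply Hdd; auto. rewrite Rabs_right by lra. lra. }
   assert (v <= c) by (apply Hub; auto). lra. }
 destruct HC as [i [Hi Hci]].
 assert (Hci0 : q c i = 0) by (specialize (HB i Hi); lra).
 assert (Hct : c > t1) by (destruct (Req_dec c t1) as [E1|E1]; [subst; specialize (Hq1 i Hi); lra | lra]).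
 assert (HD : D c i > 0) by (apply Hpos; auto; lra).
 destruct (deriv_pos_left _ _ _ (Hder c i Hi ltac:(lra)) HD t1 Hct) as [u [Hu Hfu]].
 simpl in Hfu. assert (q u i > 0) by (apply HA; auto; lra). lra.
Qed.

Lemma mono_deriv (h dh : R -> R) a b: a <= b -> (forall x, a <= x <= b -> is_derive h x (dh x)) -> (forall x, a <= x <= b -> dh x <= 0) -> h b <= h a.
Proof.
intros Hab Hd Hn.
destruct (MVT_gen h a b dh) as [c [Hc Heq]].
- intros x Hx. rewrite Rmin_left in Hx by lra. rewrite Rmax_right in Hx by lra. apply Hd; lra.
- intros x Hx. rewrite Rmin_left in Hx by lra. rewrite Rmax_right in Hx by lra.
  apply derivable_continuous_pt. exists (dh x). apply is_derive_Reals. apply Hd; lra.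
- rewrite Rmin_left in Hc by lra. rewrite Rmax_right in Hc by lra.
  assert (dh c <= 0) by (apply Hn; lra). nra.
Qed.

Lemma is_derive_eq (f : R -> R) x l l' : is_derive f x l -> l = l' -> is_derive f x l'.
Proof. intros H ->; exact H. Qed.

Lemma core (f df : R -> R) c C s t: 0<c -> s <= t -> (forall u, s<=u<=t -> is_derive f u (df u)) -> (forall u, s<=u<=t -> df u <= -c * f u + C) -> (f t - C/c) * exp (c*(t-s)) <= f s - C/c.
Proof.
intros Hc Hst Hd Hb.
set (h := fun u => (f u - C/c) * exp (c*(u-s))).
set (dh := fun u => df u * exp(c*(u-s)) + (f u - C/c) * (c * exp(c*(u-s)))).
assert (h t <= h s).
{ apply (mono_deriv h dh); auto.
  - intros u Hu. unfold h, dh.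
    assert (H1: is_derive (fun u => minus (f u) (C/c)) u (minus (df u) 0)).
    { apply (is_derive_minus f (fun _ => C/c) u (df u) 0). apply Hd; auto. apply (is_derive_const (C/c)). }
    assert (H2: is_derive (fun u => exp (c*(u-s))) u (c * exp(c*(u-s)))).
    { auto_derive. auto. unfold Rminus. ring. }
    pose proof (is_derive_mult _ _ _ _ _ H1 H2 Rmult_comm) as H3.
    eapply is_derive_eq. apply (is_derive_ext _ _ _ _ (fun _ => eq_refl) H3).
    unfold minus, plus, mult, opp, zero; simpl. ring.
  - intros u Hu. unfold dh. specialize (Hb u Hu). pose proof (exp_pos (c*(u-s))).
    assert (df u + c * (f u - C/c) <= 0). { replace (c * (f u - C/c)) with (c * f u - C) by (field; lra). lra. }
    nra. }
unfold h in H. replace (s - s) with 0 in H by ring. rewrite Rmult_0_r, exp_0, Rmult_1_r in H. exact H.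
Qed.

Lemma barrier (f df : R -> R) c C B s t : 0 < c -> s <= t ->
  (forall u, s<=u<=t -> is_derive f u (df u)) -> (forall u, s<=u<=t -> df u <= -c * f u + C) ->
  f s <= B -> C / c <= B -> f t <= B.
Proof.
 intros Hc Hst Hd Hb Hs HB.
 pose proof (core f df c C s t Hc Hst Hd Hb) as H.
 pose proof (exp_ineq1_le (c * (t - s))).
 assert (c * (t - s) >= 0) by nra.
 destruct (Rle_dec (f t) (C / c)). lra.
 assert ((f t - C/c) * exp (c * (t - s)) >= (f t - C/c) * 1) by (apply Rle_ge, Rmult_le_compat_l; lra).
 lra.
Qed.

Lemma is_derive_neg (f : R -> R) x l : is_derive f x l -> is_derive (fun s => - f s) x (- l).
Proof. intros H. pose proof (is_derive_opp f x l H) as H2.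
 apply (is_derive_ext _ _ _ _ (fun _ => eq_refl) H2). Qed.

Theorem corollary4 (n : nat) (G : nat -> nat -> bool) (x y z w : R)
  (psi eta : nat -> R)
  (Hn : (2 <= n)%nat)
  (HG : simple_graph n G) (Hconn : connected n G)
  (Hzw : z > w) (Hwx : w > x) (Hxy : x > y) (Hrd : w + x > z + y)
  (Hw : w > 0) (Hz : z > 0)
  (Hpsi : forall i, (i < n)%nat -> psi i > 0)
  (Heta : forall i, (i < n)%nat -> 0 <= eta i <= 1) :
  forall q0 : nat -> R,
  exists (lamlow : nat -> R) (Tlow : R),
    (forall i, (i < n)%nat -> lamlow i > 0) /\ Tlow > 0 /\
    forall (lam : nat -> R -> R) (q : R -> nat -> R),
      (forall i t, (i < n)%nat -> 0 <= t -> lam i t > 0) ->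
      (forall i s t, (i < n)%nat -> 0 <= s -> s <= t -> lam i s <= lam i t) ->
      (forall i M, (i < n)%nat -> exists T, forall t, t >= T -> lam i t > M) ->
      (forall i t, (i < n)%nat -> 0 <= t < Tlow -> lam i t < lamlow i) ->
      is_solution n G x y z w psi eta lam q0 q ->
      exists T, forall t i, t >= T -> (i < n)%nat -> q t i > 0.
Proof.
 intros q0.
 set (K := KK x y z w).
 assert (HK : K > 0). { unfold K, KK. pose proof (Rabs_pos x). pose proof (Rabs_pos y).
   pose proof (Rabs_pos z). rewrite (Rabs_pos_eq w) by lra. lra. }
 set (g := (w + x - y - z) / 8).
 assert (Hg : g > 0) by (unfold g; lra).
 set (rho := Rmin (1/2) (g / (2 * K))).
 assert (Hrho1 : rho <= 1/2) by apply Rmin_l.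
 assert (Hrho2 : rho <= g / (2 * K)) by apply Rmin_r.
 assert (Hrho0 : 0 < rho) by (apply Rmin_pos; [lra | apply Rdiv_lt_0_compat; lra]).
 assert (Hrho3 : 2 * rho * K <= g).
 { assert (g / (2*K) * (2 * K) = g) by (field; lra). nra. }
 set (C0 := INR n * K).
 assert (HC0 : 0 <= C0) by (unfold C0; pose proof (pos_INR n); nra).
 set (M := fun i => Rabs (q0 i) + 1 + C0 / psi i).
 assert (HM : forall i, (i < n)%nat -> M i >= Rabs (q0 i) + 1 /\ M i >= C0 / psi i).
 { intros i Hi. unfold M. pose proof (Hpsi i Hi). assert (0 <= C0 / psi i) by (apply Rdiv_le_0_compat; lra).
   pose proof (Rabs_pos (q0 i)). lra. }
 set (t1 := 2 + sumR n (fun i => (Rabs (q0 i) + 1) / g)).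
 assert (Ht1 : forall i, (i < n)%nat -> t1 >= 2 + (Rabs (q0 i) + 1) / g).
 { intros i Hi. unfold t1. assert ((Rabs (q0 i) + 1) / g <= sumR n (fun i => (Rabs (q0 i) + 1) / g)).
   { apply (sumR_ge_one n (fun i => (Rabs (q0 i) + 1) / g)); auto. intros j _.
     pose proof (Rabs_pos (q0 j)). apply Rdiv_le_0_compat; lra. } lra. }
 assert (Ht1pos : t1 >= 2).
 { unfold t1. assert (0 <= sumR n (fun i => (Rabs (q0 i) + 1) / g)).
   { apply sumR_nonneg. intros j _. pose proof (Rabs_pos (q0 j)). apply Rdiv_le_0_compat; lra. } lra. }
 exists (fun i => rho / M i), (t1 + 1).
 split. { intros i Hi. destruct (HM i Hi). pose proof (Rabs_pos (q0 i)). apply Rdiv_lt_0_compat; lra. }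
 split. lra.
 intros lam q Hlpos Hmono Hinf Hlow [Hq0 [Hrc Hder]].
 set (D := fun t i => rhs n G x y z w psi eta lam t (q t) i).
 assert (HRC : forall i, (i < n)%nat -> exists d, d > 0 /\ forall s, 0 < s < d -> Rabs (q s i - q0 i) < 1).
 { intros i Hi. specialize (Hrc i Hi). rewrite filterlim_locally in Hrc.
   destruct (Hrc (mkposreal 1 Rlt_0_1)) as [d Hd].
   exists d. split. apply cond_pos. intros s Hs. apply (Hd s).
   - change (Rabs (s - 0) < d). rewrite Rminus_0_r, Rabs_pos_eq by lra. lra.
   - lra. }
 assert (HDb : forall t i, (i < n)%nat -> - psi i * q t i - C0 <= D t i <= - psi i * q t i + C0).
 { intros t i Hi. unfold D. rewrite rhs_decomp. unfold nbsum.
   set (F := fun j => if G i j then Gf x y z w (eta i) (prob (lam i t) (q t i)) (prob (lam j t) (q t j)) else 0).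
   assert (HF : forall j, (j < n)%nat -> - K <= F j <= K).
   { intros j Hj. unfold F. destruct (G i j).
     - apply Gf_bound. auto. pose proof (prob_range (lam i t) (q t i)); lra.
       pose proof (prob_range (lam j t) (q t j)); lra.
     - lra. }
   pose proof (sumR_le n F (fun _ => K) (fun j Hj => proj2 (HF j Hj))).
   pose proof (sumR_le n (fun _ => - K) F (fun j Hj => proj1 (HF j Hj))).
   rewrite sumR_const in *. unfold C0. fold F. lra. }
 assert (Hdq : forall t i, (i < n)%nat -> 0 < t -> is_derive (fun s => q s i) t (D t i)).
 { intros t i Hi Ht. apply Hder; auto. }
 assert (HBd : forall t j, 0 < t -> (j < n)%nat -> Rabs (q t j) <= M j).
 { intros t j Ht Hj. destruct (HRC j Hj) as [d [Hd Hdd]]. destruct (HM j Hj) as [HM1 HM2].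
   pose proof (Hpsi j Hj) as Hp.
   destruct (Rlt_le_dec t d) as [Htd|Htd].
   - specialize (Hdd t ltac:(lra)). apply Rabs_lt_between in Hdd.
     pose proof (Rle_abs (q0 j)). pose proof (Rle_abs (- q0 j)). rewrite Rabs_Ropp in *.
     apply Rabs_le; lra.
   - specialize (Hdd (d/2) ltac:(lra)). apply Rabs_lt_between in Hdd.
     pose proof (Rle_abs (q0 j)). pose proof (Rle_abs (- q0 j)). rewrite Rabs_Ropp in *.
     apply Rabs_le. split.
     + assert (- q t j <= M j).
       { apply (barrier (fun s => - q s j) (fun u => - D u j) (psi j) C0 (M j) (d/2) t);
         [lra | lra | intros u Hu; apply is_derive_neg; apply Hdq; [auto | lra]
         | intros u Hu; pose proof (HDb u j Hj); lra | lra | lra]. }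
       lra.
     + apply (barrier (fun s => q s j) (fun u => D u j) (psi j) C0 (M j) (d/2) t);
         [lra | lra | intros u Hu; apply Hdq; [auto | lra]
         | intros u Hu; pose proof (HDb u j Hj); lra | simpl; lra | lra]. }
 assert (HNear : forall t j, 0 < t < t1 + 1 -> (j < n)%nat -> Rabs (prob (lam j t) (q t j) - 1/2) <= rho).
 { intros t j Ht Hj. apply prob_near. lra.
   pose proof (Hlpos j t Hj ltac:(lra)). pose proof (Hlow j t Hj ltac:(lra)) as Hl. simpl in Hl.
   pose proof (HBd t j ltac:(lra) Hj). destruct (HM j Hj). pose proof (Rabs_pos (q0 j)).
   assert (Hmp : M j > 0) by lra.
   rewrite Rabs_mult, (Rabs_pos_eq (lam j t)) by lra.
   assert (rho / M j * M j = rho) by (field; lra).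
   pose proof (Rabs_pos (q t j)). nra. }
 assert (HLow : forall t i, 0 < t < t1 + 1 -> (i < n)%nat -> D t i >= - psi i * q t i + g).
 { intros t i Ht Hi. unfold D. rewrite rhs_decomp. unfold nbsum.
   set (F := fun j => if G i j then Gf x y z w (eta i) (prob (lam i t) (q t i)) (prob (lam j t) (q t j)) else 0).
   assert (HF : forall j, (j < n)%nat -> G i j = true -> F j >= g).
   { intros j Hj HGj. unfold F. rewrite HGj.
     pose proof (Gf_near x y z w (eta i) (prob (lam i t) (q t i)) (prob (lam j t) (q t j)) rho Hrd (Heta i Hi)
       ltac:(lra) (HNear t i Ht Hi) (HNear t j Ht Hj)).
     fold K in H. unfold g in *. lra. }
   assert (HF0 : forall j, (j < n)%nat -> 0 <= F j).
   { intros j Hj. destruct (G i j) eqn:E. pose proof (HF j Hj E); lra. unfold F; rewrite E; lra. }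
   destruct (neighbour n G Hn Hconn i Hi) as [k [Hk HGk]].
   pose proof (sumR_ge_one n F k HF0 Hk). pose proof (HF k Hk HGk). fold F. lra. }
 assert (HPos : forall i, (i < n)%nat -> q t1 i > 0).
 { intros i Hi. destruct (HRC i Hi) as [d [Hd Hdd]]. pose proof (Hpsi i Hi) as Hp.
   set (s := Rmin (d/2) 1).
   assert (Hs1 : s <= d/2) by apply Rmin_l. assert (Hs2 : s <= 1) by apply Rmin_r.
   assert (Hs0 : 0 < s) by (apply Rmin_pos; lra).
   specialize (Hdd s ltac:(lra)). apply Rabs_lt_between in Hdd.
   pose proof (Rle_abs (q0 i)). pose proof (Rle_abs (- q0 i)). rewrite Rabs_Ropp in *.
   pose proof (Ht1 i Hi) as Ht1i.
   pose proof (core (fun u => - q u i) (fun u => - D u i) (psi i) (- g) s t1 Hp ltac:(lra)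
     (fun u Hu => is_derive_neg _ _ _ (Hdq u i Hi ltac:(lra)))
     (fun u Hu => ltac:(pose proof (HLow u i ltac:(lra) Hi); lra))) as Hc.
   simpl in Hc.
   set (Dd := g / psi i) in *.
   assert (HDd : Dd * psi i = g) by (unfold Dd; field; lra).
   assert (HDd0 : Dd > 0) by (unfold Dd; apply Rdiv_lt_0_compat; lra).
   replace (- g / psi i) with (- Dd) in Hc by (unfold Dd; field; lra).
   set (E := exp (psi i * (t1 - s))) in *.
   assert (HE : E >= 1 + psi i * (t1 - s)) by (unfold E; apply Rle_ge, exp_ineq1_le).
   assert (Hgq : g * ((Rabs (q0 i) + 1) / g) = Rabs (q0 i) + 1) by (field; lra).
   assert (Hts : t1 - s >= 1 + (Rabs (q0 i) + 1) / g) by lra.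
   apply Rnot_le_gt. intro Hq1.
   assert (HE0 : E > 0) by (unfold E; apply exp_pos).
   assert (Dd * E <= (- q t1 i - - Dd) * E) by (apply Rmult_le_compat_r; lra).
   assert (Dd * E >= Dd * (1 + psi i * (t1 - s))) by (apply Rle_ge, Rmult_le_compat_l; lra).
   assert (Dd * (1 + psi i * (t1 - s)) = Dd + g * (t1 - s)) by (rewrite <- HDd; ring).
   assert (g * (t1 - s) >= g * (1 + (Rabs (q0 i) + 1) / g)) by (apply Rle_ge, Rmult_le_compat_l; lra).
   assert (g * (1 + (Rabs (q0 i) + 1) / g) = g + Rabs (q0 i) + 1) by (field; lra).
   lra. }
 exists t1. intros t i Ht Hi.
 apply (invariance n q D t1); auto; try lra.
 intros t' i' Ht' Hi' Hz0 Hnn. unfold D. rewrite rhs_decomp. rewrite Hz0, prob_zero. unfold nbsum.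
 set (F := fun j => if G i' j then Gf x y z w (eta i') (1/2) (prob (lam j t') (q t' j)) else 0).
 assert (HF : forall j, (j < n)%nat -> G i' j = true -> F j > 0).
 { intros j Hj HGj. unfold F. rewrite HGj. apply Gf_pos; auto.
   apply prob_ge_half. pose proof (Hlpos j t' Hj ltac:(lra)). pose proof (Hnn j Hj). nra. }
 assert (HF0 : forall j, (j < n)%nat -> 0 <= F j).
 { intros j Hj. destruct (G i' j) eqn:E. pose proof (HF j Hj E); lra. unfold F; rewrite E; lra. }
 destruct (neighbour n G Hn Hconn i' Hi') as [k [Hk HGk]].
 pose proof (sumR_ge_one n F k HF0 Hk). pose proof (HF k Hk HGk). fold F. lra.
Qed.
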